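(* Let $(X,d)\in\mathfrak U$. Then for every $r\in\operatorname{Sp}(X)$ the set $\mathbf B_X$ contains exactly one ball of radius $r$.
   Context: $\operatorname{Sp}(X)=\{d(x,y):x,y\in X,\ x\neq y\}$; $\mathfrak U$ is the class of finite ultrametric spaces $X$ with $|\operatorname{Sp}(X)|=|X|-1$. For $t\in X$ and $r\ge0$, $B_r(t)=\{x\in X: d(x,t)\leqslant r\}$; $\operatorname{Sp}_t(X)=\{d(x,t):x\in X,\ x\neq t\}$; $\mathbf B_X=\{B_r(t): t\in X,\ r\in\operatorname{Sp}_t(X)\}$. A ball of radius $r$ in $\mathbf B_X$ means a set $B_r(t)$ with $t\in X$ and $r\in\operatorname{Sp}_t(X)$. *)

(* Defs.v *)
From HB Require Import structures.
From mathcomp Require Import all_boot all_order all_algebra.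
From mathcomp Require Import reals.
Set Implicit Arguments. Unset Strict Implicit. Unset Printing Implicit Defensive.
Import Order.TTheory GRing.Theory Num.Theory.
Local Open Scope ring_scope.

Section Ultra.
Variables (R : realType) (T : finType) (d : T -> T -> R).

Definition ultrametric : Prop :=
  [/\ forall x y, 0 <= d x y,
      forall x y, d x y = 0 <-> x = y,
      forall x y, d x y = d y x
    & forall x y z, d x z <= Num.max (d x y) (d y z)].

Definition Sp : seq R :=
  undup [seq d p.1 p.2 | p <- enum [pred p : T * T | p.1 != p.2]].

Definition Spt (t : T) : seq R :=
  undup [seq d x t | x <- enum [pred x : T | x != t]].

Definition ball (t : T) (r : R) : {set T} := [set x | d x t <= r].

Definition in_classU : Prop := ultrametric /\ size Sp = (#|T| - 1)%N.

Definition is_ball_of_radius (B : {set T}) (r : R) : Prop :=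
  exists t : T, r \in Spt t /\ B = ball t r.

End Ultra.

(* Main.v *)
Require Import Defs.
From mathcomp Require Import all_boot all_order all_algebra.
From mathcomp Require Import reals.
From mathcomp Require Import zify.
Set Implicit Arguments. Unset Strict Implicit. Unset Printing Implicit Defensive.
Import Order.TTheory GRing.Theory Num.Theory.
Local Open Scope ring_scope.

Section Proof.
Variables (R : realType) (T : finType) (d : T -> T -> R).
Hypothesis Hu : ultrametric d.

Lemma dsym x y : d x y = d y x.
Proof. by case: Hu. Qed.

Lemma d0 x y : (d x y == 0) = (x == y).
Proof. case: Hu => _ H _ _; apply/eqP/eqP; [by move/H | by move/H]. Qed.

Lemma ult x y z : d x z <= Num.max (d x y) (d y z).
Proof. by case: Hu. Qed.

Lemma ult_le x y z r : d x y <= r -> d y z <= r -> d x z <= r.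
Proof. move=> h1 h2; apply: le_trans (ult x y z) _; by rewrite ge_max h1 h2. Qed.

Lemma dtt t : d t t = 0. Proof. by apply/eqP; rewrite d0. Qed.
Lemma dge0 x y : 0 <= d x y. Proof. by case: Hu. Qed.
Lemma center t r : 0 <= r -> t \in ball d t r. Proof. by rewrite inE dtt. Qed.

Definition rk (x : T) : nat := enum_rank x.

Lemma rk_inj : injective rk.
Proof. move=> x y /val_inj; exact: enum_rank_inj. Qed.

Definition P (x : T) (r : R) : bool :=
  [exists y, (rk y < rk x)%N && (d x y == r)] &&
  [forall y, (rk y < rk x)%N ==> (r <= d x y)].

Lemma P_uniq x r r' : P x r -> P x r' -> r = r'.
Proof.
case/andP=> /existsP[y /andP[hy /eqP e]] /forallP h1.
case/andP=> /existsP[y' /andP[hy' /eqP e']] /forallP h2.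
apply/eqP; rewrite eq_le.
move: (implyP (h1 y') hy') (implyP (h2 y) hy); by rewrite e e' => -> ->.
Qed.

Definition v (x : T) : R := head 0 [seq r <- Sp d | P x r].

Lemma vP x r : r \in Sp d -> P x r -> v x = r.
Proof.
move=> hr hp; rewrite /v.
have : r \in [seq r <- Sp d | P x r] by rewrite mem_filter hp hr.
case: [seq r <- Sp d | P x r] (filter_all (P x) (Sp d)) => [//|r' s] /= /andP[hp' _] _.
exact: P_uniq hp' hp.
Qed.

Definition S := [set x | [exists y, (rk y < rk x)%N]].

Lemma key t r a b : a \in ball d t r -> b \in ball d t r -> d a b = r -> a != b ->
  exists x, [/\ x \in ball d t r, x \in S & P x r].
Proof.
move=> ha hb hab nab.
have rpos : 0 < r.
  rewrite -hab lt_def; case: Hu => h _ _ _; by rewrite h d0 nab.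
have [c hc cmin] := arg_minnP rk ha.
have inB y : y \in ball d t r -> d y t <= r by rewrite inE.
have dB y z : y \in ball d t r -> z \in ball d t r -> d y z <= r.
  move=> /inB h1 /inB h2; apply: ult_le h1 _; by rewrite dsym.
have ex : exists y, (y \in ball d t r) && (d y c == r).
  have : d a b <= Num.max (d a c) (d c b) := ult a c b.
  rewrite hab le_max => /orP[h|h].
    exists a; rewrite ha /=; by rewrite eq_le h dB.
  exists b; rewrite hb /= dsym eq_le h dB //.
case: ex => y0 hy0.
have [i /andP[hi /eqP hic] imin] :=
  arg_minnP (P:=fun y => (y \in ball d t r) && (d y c == r)) rk hy0.
have ci : c != i.
  apply/eqP=> e; move: rpos; rewrite -hic -e.
  have /eqP -> : d c c == 0 by rewrite d0.
  by rewrite ltxx.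
have rci : (rk c < rk i)%N.
  rewrite ltn_neqAle cmin // andbT; apply/eqP => /rk_inj; exact/eqP.
exists i; split=> //.
  by rewrite inE; apply/existsP; exists c.
apply/andP; split.
  by apply/existsP; exists c; rewrite rci /= hic.
apply/forallP => y; apply/implyP => ry.
case: (boolP (y \in ball d t r)) => yB.
  have hyc : d y c < r.
    rewrite lt_neqAle dB // andbT; apply/negP => /eqP e.
    have := imin y; rewrite yB e eqxx => /(_ isT); by rewrite leqNgt ry.
  rewrite leNgt; apply/negP => hiy.
  by have := ult i y c; rewrite hic leNgt gt_max hiy hyc.
have : r < d y t by rewrite inE -ltNge in yB.
move=> hyt.
have hh := ult y i t.
have : r < Num.max (d y i) (d i t) by apply: lt_le_trans hyt hh.
rewrite lt_max => /orP[h|h]; first by rewrite ltW // dsym.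
by move: (inB _ hi); rewrite leNgt h.
Qed.

Lemma inSp r : r \in Sp d -> exists a b, [/\ a != b & d a b = r].
Proof.
rewrite mem_undup => /mapP[[a b]]; rewrite mem_enum /= => ab ->.
by exists a, b.
Qed.

Lemma ball_eq t1 t2 r : t1 \in ball d t2 r -> ball d t1 r = ball d t2 r.
Proof.
rewrite inE => h; apply/setP => x; rewrite !inE; apply/idP/idP => hx.
  exact: ult_le hx h.
by apply: ult_le hx _; rewrite dsym.
Qed.

End Proof.

Theorem lemma22 (R : realType) (T : finType) (d : T -> T -> R) :
  in_classU d ->
  forall r : R, r \in Sp d ->
  exists! B : {set T}, is_ball_of_radius d B r.
Proof.
case=> Hu Hsz r hr.
have [a [b [ab dab]]] := inSp hr.
have Hball : forall t, r \in Spt d t -> ball d t r = ball d b r.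
  move=> t ht.
  have ab_in : r \in Spt d b.
    rewrite mem_undup; apply/mapP; exists a; by rewrite // mem_enum.
  have fromSpt : forall t', r \in Spt d t' -> exists x,
      [/\ x \in ball d t' r, x \in S T & P d x r].
    move=> t'; rewrite mem_undup => /mapP[x]; rewrite mem_enum => xt ->.
    apply: (key Hu (t:=t') (a:=x) (b:=t') _ _ erefl xt).
      by rewrite inE lexx.
    exact: center (dge0 Hu _ _).
  case: (boolP (t \in ball d b r)) => tb; first exact: ball_eq.
  exfalso.
  have disj : forall z, z \in ball d t r -> z \in ball d b r -> False.
    move=> z; rewrite !inE => h1 h2; move: tb; rewrite inE.
    by rewrite (ult_le Hu (y:=z)) // dsym.
  have [i [hi iS Pi]] := fromSpt t ht.
  have [j [hj jS Pj]] := fromSpt b ab_in.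
  have ij : i != j by apply/eqP => e; subst j; exact: disj hi hj.
  have vi : v d i = r by exact: vP.
  have vj : v d j = r by exact: vP.
  have sub : {subset Sp d <= map (v d) (enum (S T :\ j))}.
    move=> r0 hr0; have [a0 [b0 [ab0 e0]]] := inSp hr0.
    have [x [_ xS Px]] : exists x, [/\ x \in ball d b0 r0, x \in S T & P d x r0].
      apply: (key Hu (a:=a0) (b:=b0) _ _ e0 ab0); first by rewrite inE e0.
      by rewrite -e0; exact: center (dge0 Hu _ _).
    have vx : v d x = r0 by exact: vP.
    apply/mapP; case: (eqVneq x j) => [exj|nxj].
      exists i; first by rewrite mem_enum in_setD1 ij iS.
      by rewrite vi -vj -exj vx.
    by exists x; [rewrite mem_enum in_setD1 nxj xS | rewrite vx].
  have h1 := uniq_leq_size (undup_uniq _) sub.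
  rewrite size_map -cardE in h1.
  have := cardsD1 j (S T); rewrite jS => hS.
  have [m _ mmin] := arg_minnP (rk (T:=T)) (isT : predT a).
  have mS : m \notin S T.
    rewrite inE; apply/negP => /existsP[y hy].
    by have := mmin y isT; rewrite leqNgt hy.
  have : (#|S T| <= #|[set~ m]|)%N.
    apply: subset_leq_card; apply/subsetP => x hx; rewrite !inE.
    by apply/eqP => e; move: mS; rewrite -e hx.
  rewrite cardsC1 => hC.
  have pos : (0 < size (Sp d))%N by case: (Sp d) hr.
  rewrite /= add1n in hS; rewrite -subn1 in hC.
  have e1 : (size (Sp d) <= #|S T :\ j|)%N := h1.
  have e2 : #|S T| = (#|S T :\ j|).+1 := hS.
  have e3 : (#|S T| <= #|T| - 1)%N := hC.
  move: Hsz e1 e2 e3 pos; clear; lia.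
exists (ball d b r); split.
  exists b; split => //.
  rewrite mem_undup; apply/mapP; exists a; by rewrite // mem_enum.
move=> B [t [ht ->]]; by rewrite (Hball t ht).
Qed.
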